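(* If $\mathcal D_n$ is the minimal (quotient) DFA of a left ideal, with initial state $0$ and transition semigroup $T_n$, then every transformation in $T_n$ is initially aperiodic, and no state of $\mathcal D_n$ accepts the empty language.
   Context: A left ideal is a nonempty $L\subseteq\Sigma^*$ with $L=\Sigma^*L$. The transition semigroup is the set of state transformations induced by nonempty words; $qt$ denotes the image of state $q$ under $t$. For a transformation $t$, the sequence $0,0t,0t^2,\dots$ eventually repeats: there are $i<j$ with $0,0t,\dots,0t^{j-1}$ distinct and $0t^j=0t^i$; $j-i$ is the period of $t$, and $t$ is initially aperiodic if its period is $1$. *)

(* Defs.v *)
From mathcomp Require Import all_boot.
Set Implicit Arguments. Unset Strict Implicit. Unset Printing Implicit Defensive.

Record dfa (Sigma Q : finType) := Dfa {
  delta : Q -> Sigma -> Q;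
  init : Q;
  final : pred Q }.

Section DFA.
Variables (Sigma Q : finType) (D : dfa Sigma Q).

Definition run (q : Q) (w : seq Sigma) : Q := foldl (delta D) q w.

Definition lang_of (q : Q) (w : seq Sigma) : Prop := final D (run q w).

Definition dfa_lang (w : seq Sigma) : Prop := lang_of (init D) w.

Definition minimal_dfa : Prop :=
  (forall q : Q, exists w, run (init D) w = q) /\
  (forall p q : Q, (forall w, lang_of p w <-> lang_of q w) -> p = q).

Definition word_trans (w : seq Sigma) : Q -> Q := fun q => run q w.

Definition in_trans_semigroup (t : Q -> Q) : Prop :=
  exists w : seq Sigma, w != [::] /\ forall q, t q = word_trans w q.
End DFA.

Definition left_ideal (Sigma : Type) (L : seq Sigma -> Prop) : Prop :=
  (exists w, L w) /\
  (forall w, L w <-> exists u v, w = u ++ v /\ L v).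

(* period of t from state q0 equals 1: with i < j such that
   q0, q0 t, ..., q0 t^(j-1) are distinct and q0 t^j = q0 t^i, j - i = 1 *)
Definition initially_aperiodic (Q : finType) (q0 : Q) (t : Q -> Q) : Prop :=
  exists i j : nat, i < j /\
    (forall k l, k < l -> l < j -> iter k t q0 <> iter l t q0) /\
    iter j t q0 = iter i t q0 /\ j - i = 1.

(* Main.v *)
Require Import Defs.
From mathcomp Require Import all_boot.

Section Aux.
Variables (Sigma Q : finType) (D : dfa Sigma Q).

Lemma run_cat q a b : run D q (a ++ b) = run D (run D q a) b.
Proof. by rewrite /run foldl_cat. Qed.

Definition wp (w : seq Sigma) k := iter k (fun u => u ++ w) [::].

Lemma wp_comm w k : wp w k ++ w = w ++ wp w k.
Proof.
rewrite /wp; elim: k => [|k IH] /=; first by rewrite cats0.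
by rewrite {1}IH -catA.
Qed.

Lemma iter_wp w k q : iter k (word_trans D w) q = run D q (wp w k).
Proof.
elim: k => [|k IH] //=. by rewrite IH /word_trans -run_cat.
Qed.
End Aux.

Theorem lemma2 (Sigma Q : finType) (D : dfa Sigma Q) :
  minimal_dfa D -> left_ideal (dfa_lang D) ->
  (forall t : Q -> Q, in_trans_semigroup D t -> initially_aperiodic (init D) t) /\
  (forall q : Q, exists w, lang_of D q w).
Proof.
move=> [reach dist] [[v Lv] LI].
have pref : forall u x, dfa_lang D x -> dfa_lang D (u ++ x).
  by move=> u x Hx; apply/LI; exists u, x.
split; last first.
  move=> q; have [w0 Hw0] := reach q; exists v.
  by move: (pref w0 v Lv); rewrite /dfa_lang /lang_of run_cat Hw0.
move=> t [w [_ Ht]].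
have tE : forall k, iter k t (init D) = iter k (word_trans D w) (init D).
  elim=> [|k IH] //=; by rewrite IH Ht.
have mono1 : forall k x, lang_of D (iter k t (init D)) x ->
                          lang_of D (iter k.+1 t (init D)) x.
  move=> k x; rewrite !tE !iter_wp /lang_of -!run_cat => H.
  have := pref w _ H; rewrite /dfa_lang /lang_of catA -wp_comm.
  by rewrite /wp /=.
have mono : forall k m x, k <= m -> lang_of D (iter k t (init D)) x ->
                          lang_of D (iter m t (init D)) x.
  move=> k m x /subnKC <-; elim: (m - k) => [|d IH]; first by rewrite addn0.
  by move=> H; rewrite addnS; apply: mono1; apply: IH.
pose f := fun k => iter k t (init D).
pose P := fun j => [exists i : 'I_j, f i == f j].
have exP : exists j, P j.
  case: (boolP [exists j : 'I_(#|Q|.+1), P j]).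
    by move/existsP=> [j Pj]; exists j.
  move=> /existsPn Hn; exfalso.
  have inj : injective (fun k : 'I_(#|Q|.+1) => f k).
    move=> a b Hab; apply/val_inj => /=.
    case: (ltngtP a b) => // Hlt.
    - have := Hn b; rewrite /P; move/existsPn => /(_ (Ordinal Hlt)).
      by rewrite Hab eqxx.
    - have := Hn a; rewrite /P; move/existsPn => /(_ (Ordinal Hlt)).
      by rewrite Hab eqxx.
  by have := leq_card _ inj; rewrite card_ord ltnn.
pose j := ex_minn exP.
have [Pj minj] : P j /\ forall m, P m -> j <= m.
  by rewrite /j; case: ex_minnP.
move: Pj => /existsP [[i Hij] /eqP /= Hfi].
have eqi : f i.+1 = f i.
  apply: dist => x; split => H.
  - have -> : f i = f j by []. exact: mono H.
  - exact: mono H.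
have ji : j = i.+1.
  apply/eqP; rewrite eqn_leq Hij andbT; apply: minj.
  by apply/existsP; exists (Ordinal (ltnSn i)); apply/eqP; symmetry; exact: eqi.
exists i, j; split => //; split; last by split; [symmetry; exact: Hfi | rewrite ji subSnn].
move=> k l Hkl Hlj Heq.
suff : j <= l by rewrite leqNgt Hlj.
apply: minj.
by apply/existsP; exists (Ordinal Hkl); apply/eqP.
Qed.
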